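(* Let $\mathcal{N}=(D,P)$ be a broadcast network with client $P=(Q,I,\delta)$, let $F\subseteq Q$, and let $c_0$ be a configuration. There is a fair computation starting from $c_0$ if and only if there is a configuration $c$ with $c_0\to^* c$ and $c\Rightarrow_F c$.
   Context: A broadcast network is a pair $\mathcal{N}=(D,P)$ where $D$ is a finite set of messages and $P=(Q,I,\delta)$ is a finite automaton with $\delta\subseteq Q\times\mathrm{Ops}(D)\times Q$, $\mathrm{Ops}(D)=\{!a,\ ?a: a\in D\}$. A configuration is $c\in Q^k$ for some $k$, with entries $c[i]$. For $c,c'\in Q^k$ and $a\in D$, $c\xrightarrow{a}c'$ holds if there is $i$ with $(c[i],!a,c'[i])\in\delta$, a set $R\subseteq[1..k]\setminus\{i\}$ with $(c[j],?a,c'[j])\in\delta$ for $j\in R$, and $c[j]=c'[j]$ for $j\notin R\cup\{i\}$; then $\mathrm{type}(c\xrightarrow{a}c')=R\cup\{i\}$. $\to^*$ denotes zero or more transitions. For an infinite computation $\pi=c_0\to c_1\to\cdots$, $\mathrm{Inf}(\pi)=\{i: i\in\mathrm{type}(c_j\to c_{j+1})\text{ for infinitely many } j\}$ and $\mathrm{Fin}(\pi)=\{i: c_j[i]\in F\text{ for infinitely many } j\}$; $\pi$ is fair if $\mathrm{Inf}(\pi)\subseteq\mathrm{Fin}(\pi)$. A finite computation $c_1\to c_2\to\cdots\to c_n$ with $n\ge2$ is good for $F$, written $c_1\Rightarrow_F c_n$, if every client $i$ with $i\in\mathrm{type}(c_j\to c_{j+1})$ for some $j$ satisfies $c_k[i]\in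 F$ for some $k\in[1..n]$. *)

(* Defs.v *)
From mathcomp Require Import all_boot.
Set Implicit Arguments. Unset Strict Implicit. Unset Printing Implicit Defensive.

Inductive op (D : Type) := Send of D | Recv of D.

Section Broadcast.
Variables (D Q : finType).
Variable delta : Q -> op D -> Q -> bool.
Variable k : nat.

Definition config := 'I_k -> Q.

(* c --a--> c' with type T = R ∪ {i} *)
Definition step_type (c : config) (a : D) (T : {set 'I_k}) (c' : config) : Prop :=
  exists i : 'I_k,
    [/\ i \in T,
        delta (c i) (Send a) (c' i),
        (forall j, j \in T -> j != i -> delta (c j) (Recv a) (c' j))
      & (forall j, j \notin T -> c j = c' j)].

Definition step (c : config) (T : {set 'I_k}) (c' : config) : Prop :=
  exists a : D, step_type c a T c'.

Definition is_comp (cs : nat -> config) (Ts : nat -> {set 'I_k}) (m : nat) : Prop :=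
  forall j, j < m -> step (cs j) (Ts j) (cs j.+1).

Definition reach (c0 c : config) : Prop :=
  exists (m : nat) (cs : nat -> config) (Ts : nat -> {set 'I_k}),
    [/\ cs 0 = c0, cs m = c & is_comp cs Ts m].

(* c1 =>_F cn : a finite computation with n >= 2 configurations (m = n-1 >= 1
   steps) such that every client participating in some transition visits F
   in some configuration of the computation. *)
Definition good (F : {set Q}) (c c' : config) : Prop :=
  exists (m : nat) (cs : nat -> config) (Ts : nat -> {set 'I_k}),
    [/\ 0 < m, cs 0 = c, cs m = c', is_comp cs Ts m
      & forall (i : 'I_k) (j : nat), j < m -> i \in Ts j ->
          exists l, l <= m /\ cs l i \in F].

Definition inf_often (P : nat -> Prop) : Prop := forall N, exists j, N <= j /\ P j.

Definition fair_comp (F : {set Q}) (cs : nat -> config) (Ts : nat -> {set 'I_k}) : Prop :=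
  (forall j, step (cs j) (Ts j) (cs j.+1)) /\
  (forall i : 'I_k, inf_often (fun j => i \in Ts j) ->
                    inf_often (fun j => cs j i \in F)).

End Broadcast.

(* Main.v *)
Require Import Defs.
From mathcomp Require Import all_boot.
From mathcomp Require Import zify.
From Stdlib Require Import Classical FunctionalExtensionality.

Set Implicit Arguments. Unset Strict Implicit. Unset Printing Implicit Defensive.

Lemma fin_bound_seq (T : eqType) (Qp : T -> nat -> Prop) (s : seq T) :
  (forall x n n', n <= n' -> Qp x n -> Qp x n') ->
  (forall x, exists N, Qp x N) -> exists N, forall x, x \in s -> Qp x N.
Proof.
move=> Hmon Hex; elim: s => [|y s [N HN]]; first by exists 0.
have [M HM] := Hex y.
exists (maxn N M) => x; rewrite inE => /orP [/eqP -> | Hx].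
  by apply: Hmon HM; rewrite leq_maxr.
by apply: Hmon (HN x Hx); rewrite leq_maxl.
Qed.

Lemma fin_bound (T : finType) (Qp : T -> nat -> Prop) :
  (forall x n n', n <= n' -> Qp x n -> Qp x n') ->
  (forall x, exists N, Qp x N) -> exists N, forall x, Qp x N.
Proof.
move=> Hmon Hex; have [N HN] := fin_bound_seq (enum T) Hmon Hex.
by exists N => x; apply: HN; rewrite mem_enum.
Qed.

Lemma pigeon (T : finType) (f : nat -> T) :
  exists x, forall N, exists j, N <= j /\ f j = x.
Proof.
apply: NNPP => H.
have H1 : forall x, exists N, forall j, N <= j -> f j <> x.
  move=> x; apply: NNPP => H2; apply: H; exists x => N.
  apply: NNPP => H3; apply: H2; exists N => j Hj Hfj; apply: H3; by exists j.
have [N HN] := fin_bound (Qp := fun x N => forall j, N <= j -> f j <> x)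
  (fun x n n' Hnn' Hq j Hj => Hq j (leq_trans Hnn' Hj)) H1.
exact: (HN (f N) N (leqnn N)).
Qed.

Theorem lemma6 (D Q : finType) (I : {set Q}) (delta : Q -> op D -> Q -> bool)
    (F : {set Q}) (k : nat) (c0 : config Q k) :
  (exists (cs : nat -> config Q k) (Ts : nat -> {set 'I_k}),
      cs 0 = c0 /\ fair_comp delta F cs Ts)
  <->
  (exists c : config Q k, reach delta c0 c /\ good delta F c c).
Proof.
split.
- move=> [cs [Ts [Hc0 [Hstep Hfair]]]].
  pose Q1 := fun (i : 'I_k) n => (forall j, n <= j -> i \notin Ts j) \/
                                 inf_often (fun j => i \in Ts j).
  have [N1 HN1] : exists N, forall i, Q1 i N.
    apply: fin_bound.
      move=> i n n' Hn [H|H]; [left => j Hj; apply: H; exact: leq_trans Hj | by right].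
    move=> i; case: (classic (inf_often (fun j => i \in Ts j))) => H.
      by exists 0; right.
    apply: NNPP => H2; apply: H => N; apply: NNPP => H3; apply: H2.
    exists N; left => j Hj; apply/negP => Hi; apply: H3; by exists j.
  have [x Hx] := pigeon (fun j => finfun (cs j)).
  have [j1 [Hj1 Ej1]] := Hx N1.
  pose Q3 := fun (i : 'I_k) n => (forall j, N1 <= j -> i \notin Ts j) \/
                                 exists l, j1 <= l <= n /\ cs l i \in F.
  have [B HB] : exists B, forall i, Q3 i B.
    apply: fin_bound.
      move=> i n n' Hn [H|[l [Hl Hf]]]; [by left | right; exists l; split => //; lia].
    move=> i; case: (HN1 i) => [H|H].
      by exists 0; left.
    have [l [Hl Hf]] := Hfair i H j1.
    by exists l; right; exists l; split => //; lia.
  have [j2 [Hj2 Ej2]] := Hx (maxn B j1.+1).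
  have Ecs : cs j2 = cs j1.
    apply: functional_extensionality => i.
    have : finfun (cs j2) i = finfun (cs j1) i by rewrite Ej1 Ej2.
    by rewrite !ffunE.
  exists (cs j1); split.
    by exists j1, cs, Ts; split => // j _; apply: Hstep.
  exists (j2 - j1), (fun l => cs (j1 + l)), (fun l => Ts (j1 + l)); split.
  + lia.
  + by rewrite addn0.
  + by rewrite subnKC ?Ecs //; lia.
  + by move=> j _; rewrite addnS; apply: Hstep.
  + move=> i j Hj Hi; case: (HB i) => [H|[l [Hl Hf]]].
      by move: (H (j1 + j)); rewrite Hi => /(_ ltac:(lia)).
    exists (l - j1); split; first lia.
    by rewrite subnKC //; lia.
- move=> [c [[m0 [pcs [pTs [Hp0 Hpm Hpc]]]] [m [ccs [cTs [Hm Hc0 Hcm Hcc Hg]]]]]].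
  have Ecyc : forall l, l <= m -> ccs (l %% m) = ccs l.
    move=> l Hl; case: (ltnP l m) => Hlm; first by rewrite modn_small.
    have -> : l = m by lia.
    by rewrite modnn Hc0 Hcm.
  exists (fun j => if j < m0 then pcs j else ccs ((j - m0) %% m)).
  exists (fun j => if j < m0 then pTs j else cTs ((j - m0) %% m)).
  split.
    case: ifP => H //; have E0 : m0 = 0 by lia.
    by rewrite E0 subnn mod0n Hc0 -Hpm E0 Hp0.
  split.
  + move=> j; case: (ltnP j.+1 m0) => H1.
      rewrite (ltnW H1); apply: Hpc; lia.
    case: (ltnP j m0) => H2.
      have Ej : j.+1 = m0 by lia.
      rewrite Ej subnn mod0n Hc0 -Hpm -Ej; apply: Hpc; lia.
    have -> : j.+1 - m0 = (j - m0) + 1 by lia.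
    rewrite -modnDml.
    have Hr : (j - m0) %% m < m by rewrite ltn_mod.
    rewrite addn1 (Ecyc ((j - m0) %% m).+1) //; apply: Hcc; by rewrite ltn_mod.
  + move=> i Hinf.
    have [j [Hj Hi]] := Hinf m0.
    move: Hi; have -> : j < m0 = false by lia.
    move=> Hi.
    have [l [Hl Hf]] := Hg i _ (ltn_pmod (j - m0) Hm) Hi.
    move=> N; exists (m0 + (N * m + l %% m)); split.
      have : N <= N * m by rewrite leq_pmulr.
      lia.
    have -> : m0 + (N * m + l %% m) < m0 = false by lia.
    rewrite addKn modnMDl modn_mod Ecyc //.
Qed.
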